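(* For every $\gamma\in[0,1]$, the Equal Filling Till Threshold (EFTT) algorithm with threshold $\gamma$ (described in the context) is $(1-e^{-\gamma})$-CEF, i.e., on every instance the fractional matching $X$ it outputs satisfies $V_i(X)\ge (1-e^{-\gamma})\,V_i^*(y_j(X))$ for all classes $i,j$.
   Context: Online class matching (divisible setting): an instance is a bipartite graph $G=(N,M,E)$ with known agents $N$, items $M$, $E\subseteq M\times N$ ($a$ likes $o$ iff $(o,a)\in E$); agents are partitioned into $k$ known classes $N_1,\dots,N_k$. Items arrive one at a time in adversarial order; upon arrival of $o$ its set of liking agents is revealed and fractions of $o$ must be irrevocably assigned to agents liking it. A fractional matching is $X=(x_{o,a})\in[0,1]^{M\times N}$ supported on $E$ with $\sum_a x_{o,a}\le1$ for each item and $\sum_o x_{o,a}\le 1$ for each agent; the degree of an agent is $\sum_o x_{o,a}$; saturated means degree $1$. $V_i(X)=\sum_{a\in N_i}\sum_o x_{o,a}$. For class $j$, $y_j(X)\in[0,1]^M$ has $y_j(X)_o=\sum_{a\in N_j}x_{o,a}$. For $y\in[0,1]^M$, $V_i^*(y)$ is the maximum size of a fractional matching using edges of $E$ between $N_i$ and $M$ with degree at most $y_o$ at each item $o$ and at most $1$ at each agent. EFTT with threshold $\gamma$: the matching is increased continuously (water-filling). Upon arrival of item $o$: Phase I: let $Z_\gamma$ be the set of classes containing at least one agent that likes $o$ and has current degree less than $\gamma$. While $Z_\gamma\neq\emptyset$ and $o$ is not fully assigned, continuously assign mass of $o$, splitting it equally among the classes in $Z_\gamma$; within each class $i\in Z_\gamma$,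 the mass goes to the agent(s) of class $i$ liking $o$ with minimum current degree; a class is removed from $Z_\gamma$ once it no longer has an agent liking $o$ with degree less than $\gamma$. Phase II: once $Z_\gamma=\emptyset$, continuously assign the remaining mass of $o$ to the unsaturated agent(s) liking $o$ with smallest current degree, regardless of class, until $o$ is fully assigned or all agents liking $o$ are saturated. *)

(* Defs.v *)
From HB Require Import structures.
From mathcomp Require Import all_boot all_order all_algebra.
From mathcomp Require Import all_classical all_reals all_analysis.
Set Implicit Arguments. Unset Strict Implicit. Unset Printing Implicit Defensive.
Import Order.TTheory GRing.Theory Num.Theory.
Local Open Scope ring_scope.
Local Open Scope classical_set_scope.

(* Conventions:
   - agents: a finite type N; items: 'I_m, arriving in the order 0,1,...,m-1
     (every adversarial arrival order is obtained by relabelling items);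
   - E o a : agent a likes item o;
   - cls a : the class (in 'I_k) of agent a;
   - a (fractional) assignment is X : 'I_m -> N -> R, X o a = x_{o,a}. *)

Section EFTT.
Context {R : realType} {N : finType} {m k : nat}.

Definition waterfill (S : pred N) (d : N -> R) (cap amt : R) (p : N -> R) : Prop :=
  exists L : R, L <= cap /\
    (forall a, p a = if S a then Num.max 0 (L - d a) else 0) /\
    \sum_(a | S a) p a = amt.

(* Amount class i can absorb in Phase I before all its agents liking the
   item reach degree gamma (positive iff i is in Z_gamma). *)
Definition class_cap (gamma : R) (likes : pred N) (cls : N -> 'I_k)
    (deg : N -> R) (i : 'I_k) : R :=
  \sum_(a | likes a && (cls a == i)) Num.max 0 (gamma - deg a).

Definition eftt_item (gamma : R) (likes : pred N) (cls : N -> 'I_k)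
    (deg : N -> R) (x : N -> R) : Prop :=
  exists (q : 'I_k -> R) (s : R) (pc : 'I_k -> N -> R) (p2 : N -> R),
    (* Phase I: equal split among active classes, classes dropping out when
       saturated at gamma: class i gets min(cap_i, s) *)
    0 <= s /\
    (forall i, q i = Num.min (class_cap gamma likes cls deg i) s) /\
    \sum_i q i = Num.min 1 (\sum_i class_cap gamma likes cls deg i) /\
    (forall i, waterfill [pred a | likes a && (cls a == i)] deg gamma (q i) (pc i)) /\
    (* Phase II: remaining mass water-filled over all agents liking the item,
       up to saturation *)
    (let p1 := fun a => pc (cls a) a in
     let deg1 := fun a => deg a + p1 a in
     waterfill likes deg1 1
       (Num.min (1 - \sum_i q i) (\sum_(a | likes a) (1 - deg1 a))) p2 /\
     forall a, x a = p1 a + p2 a).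

Definition deg_before (X : 'I_m -> N -> R) (o : 'I_m) (a : N) : R :=
  \sum_(o' : 'I_m | (o' < o)%N) X o' a.

Definition eftt_output (gamma : R) (E : 'I_m -> N -> bool) (cls : N -> 'I_k)
    (X : 'I_m -> N -> R) : Prop :=
  forall o : 'I_m, eftt_item gamma (E o) cls (deg_before X o) (X o).

Definition V (cls : N -> 'I_k) (X : 'I_m -> N -> R) (i : 'I_k) : R :=
  \sum_(a | cls a == i) \sum_(o : 'I_m) X o a.

Definition yv (cls : N -> 'I_k) (X : 'I_m -> N -> R) (j : 'I_k) (o : 'I_m) : R :=
  \sum_(a | cls a == j) X o a.

Definition feasible_i (E : 'I_m -> N -> bool) (cls : N -> 'I_k) (i : 'I_k)
    (y : 'I_m -> R) (Y : 'I_m -> N -> R) : Prop :=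
  (forall o a, 0 <= Y o a) /\
  (forall o a, ~~ (E o a && (cls a == i)) -> Y o a = 0) /\
  (forall o, \sum_a Y o a <= y o) /\
  (forall a, \sum_(o : 'I_m) Y o a <= 1).

Definition msize (Y : 'I_m -> N -> R) : R := \sum_(o : 'I_m) \sum_a Y o a.

(* V_i^*(y): maximum size of such a fractional matching (the supremum,
   which is attained). *)
Definition Vstar (E : 'I_m -> N -> bool) (cls : N -> 'I_k) (i : 'I_k)
    (y : 'I_m -> R) : R :=
  sup [set msize Y | Y in [set Y | feasible_i E cls i y Y]].

End EFTT.

(* Main.v *)
Require Import Defs.
From HB Require Import structures.
From mathcomp Require Import all_boot all_order all_algebra.
From mathcomp Require Import all_classical all_reals all_analysis.
From mathcomp Require Import ring lra.
Import Order.TTheory GRing.Theory Num.Theory.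
Local Open Scope ring_scope.

Definition phi {R : realType} (g t : R) : R := expR (Num.min t g - g).
Arguments phi {R}.

Lemma min_diff {R : realType} (g u v : R) : u <= v ->
  0 <= Num.min v g - Num.min u g <= v - u.
Proof.
move=> uv; case: (leP v g) => hv; case: (leP u g) => hu; apply/andP; split; lra.
Qed.

Lemma phi_lip {R : realType} (g u v : R) : u <= v ->
  phi g v - phi g u <= (v - u) * expR (Num.min v g - g).
Proof.
move=> uv; rewrite /phi.
have /andP[h0 h1] := min_diff g u v uv.
set b := Num.min v g - g; set a := Num.min u g - g.
have ea : expR a = expR b * expR (a - b) by rewrite -expRD; congr expR; ring.
have e1 := expR_ge1Dx (a - b).
have eb := expR_gt0 b.
have : expR b * (1 + (a - b)) <= expR a by rewrite ea; apply: ler_wpM2l => //; exact: ltW.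
have : expR b * (b - a) <= expR b * (v - u).
  by apply: ler_wpM2l; [exact: ltW| rewrite /b /a; lra].
nra.
Qed.

Lemma phi_mono {R : realType} (g u v : R) : u <= v -> phi g u <= phi g v.
Proof.
move=> uv; rewrite /phi ler_expR; have /andP[h0 h1] := min_diff g u v uv; lra.
Qed.

Lemma phi_le1 {R : realType} (g u : R) : phi g u <= 1.
Proof. by rewrite /phi expR_le1 subr_le0 ge_min lexx orbT. Qed.

Lemma wf_facts {R : realType} {N : finType} {S : pred N} {d : N -> R} {cap amt : R} {p : N -> R} :
  waterfill S d cap amt p -> (forall a, 0 <= p a) /\ (forall a, ~~ S a -> p a = 0).
Proof.
move=> [L [_ [Hp _]]]; split=> a; rewrite Hp.
  by case: (S a) => //; rewrite le_max lexx.
by move/negbTE ->.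
Qed.

Lemma sum_le_eq_pt {R : realType} {I : finType} (P : pred I) (f g : I -> R) y :
  (forall a, P a -> f a <= g a) -> \sum_(a | P a) f a = \sum_(a | P a) g a -> P y ->
  g y <= f y.
Proof.
move=> fg e Py; move: e; rewrite (bigD1 y) //= [X in _ = X](bigD1 y) //=.
have : \sum_(a | P a && (a != y)) f a <= \sum_(a | P a && (a != y)) g a.
  by apply: ler_sum => a /andP[pa _]; exact: fg.
lra.
Qed.

Lemma sum_cls {R : realType} {N : finType} {k : nat} (likes : pred N) (cls : N -> 'I_k) i (f : N -> R) :
  (forall a, ~~ (likes a && (cls a == i)) -> f a = 0) ->
  \sum_(a | cls a == i) f a = \sum_(a | likes a && (cls a == i)) f a.
Proof.
move=> H; rewrite (bigID likes) /= [X in _ + X]big1 ?addr0.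
  by apply: eq_bigl => a; rewrite andbC.
by move=> a /andP[_ l]; apply: H; rewrite negb_and l.
Qed.

Lemma item_bound {R : realType} {N : finType} {k : nat} (gamma : R) (likes : pred N)
    (cls : N -> 'I_k) (deg x : N -> R) (i j : 'I_k) :
  eftt_item gamma likes cls deg x ->
  (forall a, 0 <= x a) /\
  exists beta : R, 0 <= beta /\
    (forall a, likes a -> cls a = i -> 1 <= phi gamma (deg a + x a) + beta) /\
    \sum_(a | cls a == i) (phi gamma (deg a + x a) - phi gamma (deg a))
      + beta * \sum_(a | cls a == j) x a <= \sum_(a | cls a == i) x a.
Proof.
move=> [q [s [pc [p2 [Hs [Hq [Hsum [Hwf [Hwf2 Hx]]]]]]]]].
have pc0 : forall i' a, 0 <= pc i' a by move=> i' a; case: (wf_facts (Hwf i')) => h _; exact: h.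
have pcS : forall i' a, ~~ (likes a && (cls a == i')) -> pc i' a = 0.
  by move=> i' a; case: (wf_facts (Hwf i')) => _ h; exact: h.
have [p20 p2S] := wf_facts Hwf2.
have x0 : forall a, 0 <= x a by move=> a; rewrite Hx; apply: addr_ge0.
split => //.
have maxle : forall t u : R, t <= u -> Num.max 0 t <= Num.max 0 u.
  by move=> t u tu; case: (leP 0 t) => h1; case: (leP 0 u) => h2; lra.
case: (boolP [exists a', likes a' && (cls a' == i) && (deg a' + x a' < gamma)]).
- move/existsP => [a' /andP[/andP[la' ca'] lta']].
  have [Li [HLi [Hpci HsumI]]] := Hwf i.
  have pcle : forall a, likes a && (cls a == i) ->
      pc i a <= Num.max 0 (gamma - deg a).
    by move=> a h; rewrite Hpci /= h; apply: maxle; lra.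
  have capne : q i <> class_cap gamma likes cls deg i.
    move=> qe.
    have := sum_le_eq_pt [pred a | likes a && (cls a == i)]
       (pc i) (fun a => Num.max 0 (gamma - deg a)) a' pcle.
    rewrite HsumI qe /class_cap => /(_ erefl); rewrite /= la' ca' => /(_ erefl) h.
    have : gamma - deg a' <= Num.max 0 (gamma - deg a') by rewrite le_max lexx orbT.
    have := Hx a'; rewrite (eqP ca') => hx.
    have := p20 a'. lra.
  have qis : q i = s.
    by move: (Hq i); case: leP => // _ e; exfalso; exact: capne.
  have sumq1 : \sum_i0 q i0 = 1.
    move: Hsum; case: leP => // _ e; exfalso; apply: capne.
    apply/eqP; rewrite eq_le; apply/andP; split.
      by rewrite Hq ge_min lexx.
    apply: (sum_le_eq_pt predT q) => //.
    by move=> i0 _; rewrite Hq ge_min lexx.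
  have p2z : forall a, p2 a = 0.
    move=> a; case: (boolP (likes a)) => la; last exact: p2S.
    have [L2 [_ [_ Hs2]]] := Hwf2.
    move: Hs2; rewrite sumq1 subrr (bigD1 a) //=.
    have : 0 <= \sum_(a0 | likes a0 && (a0 != a)) p2 a0 by apply: sumr_ge0.
    have : Num.min 0 (\sum_(a0 | likes a0) (1 - (deg a0 + pc (cls a0) a0))) <= 0.
      by rewrite ge_min lexx.
    have := p20 a; lra.
  have hxp : forall a, x a = pc (cls a) a by move=> a; rewrite Hx p2z addr0.
  have sumc : forall i0, \sum_(a | cls a == i0) x a = q i0.
    move=> i0; have [Lx [_ [_ HsI]]] := Hwf i0.
    rewrite -HsI -(sum_cls likes cls i0 (pc i0)); last exact: pcS.
    by apply: eq_bigr => a /eqP <-; exact: hxp.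
  exists (1 - expR (Li - gamma)); split; [|split].
  + by rewrite subr_ge0 expR_le1; lra.
  + move=> a la ca; rewrite hxp ca Hpci /= la ca eqxx /=.
    have h : Li <= deg a + Num.max 0 (Li - deg a) by case: (leP 0 (Li - deg a)) => h; lra.
    have : expR (Li - gamma) <= phi gamma (deg a + Num.max 0 (Li - deg a)).
      rewrite /phi ler_expR lerD2r le_min h; exact: HLi.
    lra.
  + rewrite !sumc qis.
    have pt : forall a, cls a == i ->
        phi gamma (deg a + x a) - phi gamma (deg a) <= expR (Li - gamma) * x a.
      move=> a ca; rewrite hxp (eqP ca) Hpci /=.
      case: (boolP (likes a && (cls a == i))) => l; last by rewrite addr0 subrr mulr0.
      case: (leP 0 (Li - deg a)) => h; last by rewrite addr0 subrr mulr0.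
      have := @phi_lip _ gamma (deg a) (deg a + (Li - deg a)) ltac:(lra).
      have -> : deg a + (Li - deg a) = Li by ring.
      by rewrite (min_l HLi) mulrC.
    have hs : \sum_(a | cls a == i) (phi gamma (deg a + x a) - phi gamma (deg a))
        <= \sum_(a | cls a == i) expR (Li - gamma) * x a by apply: ler_sum.
    move: hs; rewrite -mulr_sumr sumc qis => hs.
    have qj : q j <= s by rewrite Hq ge_min lexx orbT.
    have e1 : expR (Li - gamma) <= 1 by rewrite expR_le1; lra.
    have : (1 - expR (Li - gamma)) * q j <= (1 - expR (Li - gamma)) * s.
      by apply: ler_wpM2l => //; lra.
    lra.
- rewrite negb_exists => /forallP Hn.
  exists 0; split; [by []|split].
  + move=> a la ca; move: (Hn a); rewrite la ca eqxx /= -leNgt => h.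
    by rewrite /phi (min_r h) subrr expR0 addr0.
  + rewrite mul0r addr0; apply: ler_sum => a _.
    have := @phi_lip _ gamma (deg a) (deg a + x a) ltac:(have := x0 a; lra).
    have : expR (Num.min (deg a + x a) gamma - gamma) <= 1.
      by rewrite expR_le1 subr_le0 ge_min lexx orbT.
    have : (deg a + x a - deg a) = x a by ring.
    move=> ->; have := x0 a; nra.
Qed.

Theorem lemma2 (R : realType) (N : finType) (m k : nat)
    (E : 'I_m -> N -> bool) (cls : N -> 'I_k) (gamma : R)
    (X : 'I_m -> N -> R) :
  0 <= gamma <= 1 ->
  eftt_output gamma E cls X ->
  forall i j : 'I_k,
    (1 - expR (- gamma)) * Vstar E cls i (yv cls X j) <= V cls X i.
Proof.
move=> /andP[g0 g1] HX i j.
have IB := fun o => @item_bound R N k gamma (E o) cls (deg_before X o) (X o) i j (HX o).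
have Xge0 : forall o a, 0 <= X o a.
  by move=> o a; case: (IB o) => h _; exact: h.
have [beta Hb] := choice (fun o => proj2 (IB o)).
pose D (t : nat) a := \sum_(o' : 'I_m | (o' < t)%N) X o' a.
have Dstep : forall (o : 'I_m) a, D o.+1 a = D o a + X o a.
  move=> o a; rewrite /D (bigD1 o) /= ?ltnSn // addrC; congr (_ + _).
  by apply: eq_bigl => o'; rewrite ltnS ltn_neqAle andbC.
have Dm : forall a, D m a = \sum_(o : 'I_m) X o a.
  by move=> a; rewrite /D; apply: eq_bigl => o; rewrite ltn_ord.
have D0 : forall a, D 0%N a = 0 by move=> a; rewrite /D big_pred0.
have Dle : forall t a, D t a <= D m a.
  move=> t a; rewrite Dm /D [X in _ <= X](bigID (fun o : 'I_m => (o < t)%N)) /=.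
  by rewrite lerDl; apply: sumr_ge0 => o _.
have Dge0 : forall t a, 0 <= D t a by move=> t a; apply: sumr_ge0 => o _.
pose ph := phi gamma.
have ph0 : ph 0 = expR (- gamma) by rewrite /ph /phi (min_l g0) sub0r.
pose alpha a := ph (D m a) - ph 0.
pose c := 1 - expR (- gamma).
have alpha0 : forall a, 0 <= alpha a.
  by move=> a; rewrite /alpha subr_ge0; apply: phi_mono; rewrite Dm; apply: sumr_ge0.
have edge : forall o a, E o a -> cls a = i -> c <= alpha a + beta o.
  move=> o a ea ca; have [_ [he _]] := Hb o; have := he a ea ca.
  have : ph (D o.+1 a) <= ph (D m a) by apply: phi_mono.
  rewrite Dstep /alpha /c ph0 /ph /deg_before /D; lra.
have key : forall Y, feasible_i E cls i (yv cls X j) Y -> c * msize Y <= V cls X i.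
  move=> Y [Y0 [Ysup [Yy Y1]]].
  have st1 : c * msize Y <= \sum_(o : 'I_m) \sum_a Y o a * (alpha a + beta o).
    rewrite /msize mulr_sumr; apply: ler_sum => o _; rewrite mulr_sumr; apply: ler_sum => a _.
    case: (boolP (E o a && (cls a == i))) => h.
      by move: h => /andP[ea /eqP ca]; rewrite mulrC; apply: ler_wpM2l => //; exact: edge.
    by rewrite Ysup // mulr0 mul0r.
  have st2 : \sum_(o : 'I_m) \sum_a Y o a * alpha a <= \sum_(a | cls a == i) alpha a.
    rewrite exchange_big /= [X in _ <= X]big_mkcond /=; apply: ler_sum => a _.
    case: (boolP (cls a == i)) => ca.
      rewrite -mulr_suml mulrC; have := Y1 a; have := alpha0 a; nra.
    by rewrite big1 // => o _; rewrite Ysup ?mul0r // negb_and ca orbT.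
  have st3 : \sum_(o : 'I_m) beta o * \sum_a Y o a <= \sum_(o : 'I_m) beta o * yv cls X j o.
    apply: ler_sum => o _; apply: ler_wpM2l; [by case: (Hb o)| exact: Yy].
  have st4 : \sum_(o : 'I_m) \sum_a Y o a * (alpha a + beta o)
      = \sum_(o : 'I_m) \sum_a Y o a * alpha a + \sum_(o : 'I_m) beta o * \sum_a Y o a.
    rewrite -big_split /=; apply: eq_bigr => o _; rewrite mulr_sumr -big_split /=.
    by apply: eq_bigr => a _; rewrite mulrDr [beta o * _]mulrC.
  have tel : forall a, alpha a = \sum_(o : 'I_m) (ph (D o.+1 a) - ph (D o a)).
    move=> a; rewrite -(big_mkord xpredT (fun o => ph (D o.+1 a) - ph (D o a))).
    by rewrite telescope_sumr // D0.
  have st5 : \sum_(a | cls a == i) alpha a + \sum_(o : 'I_m) beta o * yv cls X j o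
      <= V cls X i.
    under eq_bigr do rewrite tel.
    rewrite exchange_big /= -big_split /= /V exchange_big /=; apply: ler_sum => o _.
    have [_ [_ hs]] := Hb o; move: hs; rewrite /deg_before.
    move=> hs; apply: le_trans hs; apply: lerD; last by [].
    by apply: ler_sum => a _; rewrite Dstep.
  lra.
have V0 : 0 <= V cls X i.
  by apply: sumr_ge0 => a _; apply: sumr_ge0 => o _.
have c0 : 0 <= c by rewrite /c subr_ge0 expR_le1 oppr_le0.
rewrite -/c; case: (boolP (c == 0)) => [/eqP -> | cn0]; first by rewrite mul0r.
have cpos : 0 < c by rewrite lt_def cn0 c0.
have hsup : Vstar E cls i (yv cls X j) <= V cls X i / c.
  rewrite /Vstar; apply: ge_sup.
    exists (msize (fun (_ : 'I_m) (_ : N) => 0 : R)); exists (fun (_ : 'I_m) (_ : N) => 0 : R) => //.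
    rewrite /= /feasible_i; split; first by [].
    split; first by [].
    split; first by move=> o; rewrite big1 //; apply: sumr_ge0 => a _.
    by move=> a; rewrite big1 // ler01.
  move=> z [Y HY <-]; rewrite ler_pdivlMr // mulrC; exact: key.
by have := ler_wpM2l c0 hsup; rewrite mulrCA divff // mulr1.
Qed.
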